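(* Let $M$ be a tame paving matroid of rank $n$ with set of dependent hyperplanes $\mathcal{L}$, and let $\mathcal{Q}=\{Q_1,\ldots,Q_k\}$ be a nice partition of $\mathcal{L}$. Let $\operatorname{rank}$ denote the rank function of $M(\mathcal{Q})$. Then (i) $\operatorname{rank}(l)=n-1$ for every $l\in\mathcal{L}$; and (ii) if $l_1,l_2\in\mathcal{L}$ lie in different parts of $\mathcal{Q}$, then $\operatorname{rank}(l_1\cup l_2)=n$.
   Context: A matroid of rank $n$ is paving ($n$-paving) if every circuit has size $n$ or $n+1$; a dependent hyperplane is a maximal subset of size at least $n$ all of whose $n$-subsets are circuits; tame means any three distinct dependent hyperplanes have empty intersection. For a partition $\mathcal{Q}$ of $\mathcal{L}$, set $H_i=\bigcup_{l\in Q_i}l$; $M(\mathcal{Q})$ is the matroid on the ground set of $M$ whose circuits are (Type 1) the $(n-1)$-subsets contained in $H_i\cap H_j$ for some $i\ne j$, (Type 2) the $n$-subsets of some $H_i$ containing no Type 1 set, (Type 3) the $(n+1)$-subsets containing no Type 1 or Type 2 set. For $L\subseteq\mathcal{L}$ with $|L|\ge2$, $M^L$ is the $n$-paving matroid on $\bigcup_{l\in L}l$ whose set of dependent hyperplanes is $L$. An $n$-paving matroid $N$ on $E$ is liftable if for every tuple $(\gamma_e)_{e\in E}$ in $\mathbb{C}^n$ spanning a hyperplane $H$ and every $q\notin H$ there exist scalars $z_e$ with $(\gamma_e+z_eq)$ in the circuit variety of $N$ (tuples whose restriction to every dependent set of $N$ is linearly dependent) and not all in a common hyperplane. $\mathcal{Q}$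 is nice if (i) $M^{Q_i}$ is not liftable whenever $|Q_i|\ge2$, and (ii) no $l\notin Q_i$ satisfies $l\subseteq\bigcup_{l'\in Q_i}l'$. *)

(* Defs.v *)
From HB Require Import structures.
From mathcomp Require Import all_boot all_order all_algebra complex.
From mathcomp Require Import Rstruct.
Set Implicit Arguments. Unset Strict Implicit. Unset Printing Implicit Defensive.
Import GRing.Theory.

Section Matroids.
Variable E : finType.

Definition circuit_axioms (C : {set {set E}}) : Prop :=
  [/\ set0 \notin C,
      (forall C1 C2, C1 \in C -> C2 \in C -> C1 \subset C2 -> C1 = C2) &
      (forall C1 C2 e, C1 \in C -> C2 \in C -> C1 != C2 -> e \in C1 :&: C2 ->
         exists2 C3, C3 \in C & C3 \subset (C1 :|: C2) :\ e)].

Definition indep (C : {set {set E}}) (X : {set E}) : bool :=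
  [forall Y : {set E}, (Y \in C) ==> ~~ (Y \subset X)].

Definition mrank (C : {set {set E}}) (X : {set E}) : nat :=
  \max_(I : {set E} | (I \subset X) && indep C I) #|I|.

Definition dependent (C : {set {set E}}) (X : {set E}) : bool := ~~ indep C X.

Definition paving (n : nat) (C : {set {set E}}) : Prop :=
  [/\ circuit_axioms C, mrank C setT = n &
      forall Y, Y \in C -> #|Y| = n \/ #|Y| = n.+1].

Definition hyp_candidate (n : nat) (C : {set {set E}}) (X : {set E}) : bool :=
  (n <= #|X|) &&
  [forall Y : {set E}, ((Y \subset X) && (#|Y| == n)) ==> (Y \in C)].

Definition dep_hyps (n : nat) (C : {set {set E}}) : {set {set E}} :=
  [set H : {set E} | maxset (hyp_candidate n C) H].

Definition tame (n : nat) (C : {set {set E}}) : Prop :=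
  forall H1 H2 H3, H1 \in dep_hyps n C -> H2 \in dep_hyps n C ->
    H3 \in dep_hyps n C -> H1 != H2 -> H1 != H3 -> H2 != H3 ->
    H1 :&: H2 :&: H3 = set0.

(* H_i = cover Q_i = union of the l in Q_i *)
Definition type1 (n : nat) (Q : {set {set {set E}}}) (X : {set E}) : bool :=
  (#|X| == n.-1) &&
  [exists Qi in Q, exists Qj in Q, (Qi != Qj) && (X \subset cover Qi :&: cover Qj)].

Definition type2 (n : nat) (Q : {set {set {set E}}}) (X : {set E}) : bool :=
  [&& #|X| == n, [exists Qi in Q, X \subset cover Qi] &
      ~~ [exists Y : {set E}, (Y \subset X) && type1 n Q Y]].

Definition type3 (n : nat) (Q : {set {set {set E}}}) (X : {set E}) : bool :=
  (#|X| == n.+1) &&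
  ~~ [exists Y : {set E}, (Y \subset X) && (type1 n Q Y || type2 n Q Y)].

Definition MQ (n : nat) (Q : {set {set {set E}}}) : {set {set E}} :=
  [set X : {set E} | [|| type1 n Q X, type2 n Q X | type3 n Q X]].

(* ---- M^L: the n-paving matroid on (cover L) with dependent hyperplanes L.
   Its circuits: the n-subsets of some l in L, and the (n+1)-subsets of
   cover L containing no such n-subset. ---- *)
Definition ML (n : nat) (L : {set {set E}}) : {set {set E}} :=
  [set X : {set E} | (X \subset cover L) &&
     (((#|X| == n) && [exists l in L, X \subset l]) ||
      ((#|X| == n.+1) &&
        ~~ [exists Y : {set E},
              [&& Y \subset X, #|Y| == n & [exists l in L, Y \subset l]]]))].

Definition CC := complex Rdefinitions.R.

Definition vecs (n : nat) (v : E -> 'rV[CC]_n) (X : {set E}) : seq 'rV[CC]_n :=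
  [seq v e | e <- enum X].

Definition in_circuit_variety (n : nat) (S : {set E}) (CN : {set {set E}})
  (v : E -> 'rV[CC]_n) : Prop :=
  forall D : {set E}, D \subset S -> dependent CN D -> ~~ free (vecs v D).

Definition liftable (n : nat) (S : {set E}) (CN : {set {set E}}) : Prop :=
  forall (gamma : E -> 'rV[CC]_n) (q : 'rV[CC]_n),
    \dim <<vecs gamma S>>%VS = n.-1 ->
    q \notin <<vecs gamma S>>%VS ->
    exists z : E -> CC,
      in_circuit_variety S CN (fun e => (gamma e + z e *: q)%R) /\
      \dim <<vecs (fun e => (gamma e + z e *: q)%R) S>>%VS = n.

Definition nice (n : nat) (C : {set {set E}}) (Q : {set {set {set E}}}) : Prop :=
  (forall Qi, Qi \in Q -> 2 <= #|Qi| -> ~ liftable n (cover Qi) (ML n Qi)) /\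
  (forall Qi l, Qi \in Q -> l \in dep_hyps n C -> l \notin Qi ->
     ~~ (l \subset cover Qi)).

End Matroids.

(* Main.v *)
Require Import Defs.
From mathcomp Require Import all_boot all_order all_algebra.
From mathcomp Require Import zify.
Set Implicit Arguments. Unset Strict Implicit. Unset Printing Implicit Defensive.

Section Aux.
Variable E : finType.

Lemma extend_subset (D A : {set E}) k : D \subset A -> #|D| <= k -> k <= #|A| ->
  exists B : {set E}, [/\ D \subset B, B \subset A & #|B| = k].
Proof.
move Hd: (k - #|D|) => d; elim: d D Hd => [|d IH] D Hd DA Dk kA.
  by exists D; split => //; lia.
have : D \proper A by rewrite properEcard DA /=; lia.
case/properP => _ [x xA xD].
have [B [DB BA cB]] := IH (x |: D) ltac:(rewrite cardsU1 xD /=; lia)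
   ltac:(by rewrite subUset sub1set xA DA) ltac:(rewrite cardsU1 xD /=; lia) kA.
by exists B; split => //; apply: subset_trans DB; apply: subsetUr.
Qed.

Lemma mrank_ge (K : {set {set E}}) (X I : {set E}) : I \subset X -> indep K I -> #|I| <= mrank K X.
Proof. by move=> IX iI; rewrite /mrank; apply: (leq_bigmax_cond I); rewrite IX iI. Qed.

Lemma mrank_le (K : {set {set E}}) (X : {set E}) k :
  (forall I : {set E}, I \subset X -> indep K I -> #|I| <= k) -> mrank K X <= k.
Proof. by move=> H; apply/bigmax_leqP => I /andP[]; exact: H. Qed.

Lemma indep_small (K : {set {set E}}) (X : {set E}) k :
  (forall Z : {set E}, Z \subset X -> #|Z| = k -> exists2 Y, Y \in K & Y \subset Z) ->
  forall I : {set E}, I \subset X -> indep K I -> #|I| < k.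
Proof.
move=> H I IX iI; rewrite ltnNge; apply/negP => kI.
have h0 : #|@set0 E| <= k by rewrite cards0.
have [Z [_ ZI cZ]] := extend_subset (sub0set I) h0 kI.
have [Y YK YZ] := H Z (subset_trans ZI IX) cZ.
by move/forallP: iI => /(_ Y); rewrite YK (subset_trans YZ ZI).
Qed.

Lemma indepP (K : {set {set E}}) (I : {set E}) :
  (forall Y : {set E}, Y \in K -> Y \subset I -> False) -> indep K I.
Proof.
move=> H; apply/forallP => Y; apply/implyP => YK; apply/negP => YI; exact: H YK YI.
Qed.

End Aux.

Lemma ar1 (n s y i j k : nat) : 0 < n -> s = n.-1 -> y = n -> 1 < k ->
  i + j = s -> i + k = y -> 0 < j.
Proof. lia. Qed.

Section Main.
Variables (E : finType) (n : nat) (C : {set {set E}}) (Q : {set {set {set E}}}).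
Hypothesis hP : paving n C.
Hypothesis hT : tame n C.
Hypothesis hQ : partition Q (dep_hyps n C).
Hypothesis hN : nice n C Q.

Lemma circ_card (Y : {set E}) : Y \in C -> n <= #|Y|.
Proof. by case: hP => _ _ /(_ Y) H /H [] ->. Qed.

Lemma dh_cand (l : {set E}) : l \in dep_hyps n C -> hyp_candidate n C l.
Proof. by rewrite inE => /maxsetP []. Qed.

Lemma dh_card (l : {set E}) : l \in dep_hyps n C -> n <= #|l|.
Proof. by move/dh_cand => /andP[]. Qed.

Lemma dh_sub (l Y : {set E}) : l \in dep_hyps n C -> Y \subset l -> #|Y| = n -> Y \in C.
Proof.
move/dh_cand => /andP[_ /forallP H] Yl cY.
by have := H Y; rewrite Yl cY eqxx.
Qed.

Lemma dh_n (l : {set E}) : l \in dep_hyps n C -> 0 < n.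
Proof.
move=> hl; rewrite lt0n; apply/negP => /eqP n0.
have h := dh_sub hl (sub0set l) (_ : #|@set0 E| = n).
case: hP => [[c0 _ _] _ _]; rewrite h // in c0.
by rewrite cards0 n0.
Qed.

Lemma dh_inter (l l' : {set E}) : l \in dep_hyps n C -> l' \in dep_hyps n C ->
  n.-1 <= #|l :&: l'| -> l = l'.
Proof.
move=> hl hl' big.
have n0 := dh_n hl.
have h0 : #|@set0 E| <= n.-1 by rewrite cards0.
have [S [_ Ssub cS]] := extend_subset (sub0set (l :&: l')) h0 big.
have Sl : S \subset l by apply: subset_trans Ssub (subsetIl _ _).
have Sl' : S \subset l' by apply: subset_trans Ssub (subsetIr _ _).
set U := l :|: l'.
have SU : S \subset U by apply: subset_trans Sl (subsetUl _ _).
have key : forall k (Y : {set E}), #|Y :\: S| < k -> Y \subset U -> #|Y| = n -> Y \in C.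
  elim=> [//|k IH] Y lt YU cY.
  have [le1|gt1] := leqP #|Y :\: S| 1.
    case: (boolP (Y \subset l)) => [Yl|/subsetPn [a aY anl]]; first exact: dh_sub hl Yl cY.
    case: (boolP (Y \subset l')) => [Yl'|/subsetPn [b bY bnl']]; first exact: dh_sub hl' Yl' cY.
    have aS : a \in Y :\: S.
      by rewrite inE aY andbT; apply: contra anl => aS; apply: (subsetP Sl).
    have bS : b \in Y :\: S.
      by rewrite inE bY andbT; apply: contra bnl' => bS; apply: (subsetP Sl').
    have ab : a != b.
      apply/eqP => eab; subst b; have := subsetP YU a aY.
      by rewrite inE (negbTE anl) (negbTE bnl').
    have : #|[set a; b]| <= #|Y :\: S|.
      by apply: subset_leq_card; rewrite subUset !sub1set aS bS.
    by rewrite cards2 ab => /leq_trans /(_ le1).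
  have : 0 < #|Y :\: S| by apply: leq_trans gt1.
  rewrite card_gt0 => /set0Pn [y1 y1S].
  have : 0 < #|(Y :\: S) :\ y1| by move: gt1; rewrite (cardsD1 y1 (Y :\: S)) y1S.
  rewrite card_gt0 => /set0Pn [y2]; rewrite inE => /andP [y21 y2S].
  move: y21; rewrite inE => y21.
  have : 0 < #|S :\: Y|.
    have h1 := cardsID Y S; have h2 := cardsID S Y; rewrite setIC in h2.
    exact: (ar1 n0 cS cY gt1 h1 h2).
  rewrite card_gt0 => /set0Pn [e]; rewrite inE => /andP [eY eS].
  have Ci : forall y, y \in Y :\: S -> e |: (Y :\ y) \in C.
    move=> y yS; move: (yS); rewrite inE => /andP [ynS yY].
    apply: (IH).
    - have : #|(Y :\: S) :\ y| < k by move: lt; rewrite (cardsD1 y (Y :\: S)) yS.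
      apply: leq_ltn_trans; apply: subset_leq_card; apply/subsetP => x.
      rewrite !inE => /andP [xS /orP [/eqP xe| /andP [xy xY]]].
        by subst x; rewrite eS in xS.
      by rewrite xy xS xY.
    - rewrite subUset sub1set (subsetP SU e eS) /=.
      by apply: subset_trans YU; apply: subD1set.
    - rewrite cardsU1 !inE negb_and eY orbT /=.
      by move: cY; rewrite (cardsD1 y Y) yY.
  have C1 := Ci y1 y1S; have C2 := Ci y2 y2S.
  move: (y1S) (y2S); rewrite !inE => /andP [y1nS y1Y] /andP [y2nS y2Y].
  have ey2 : y2 != e by apply: contraNneq y2nS => ->.
  case: hP => [[_ _ elim3] _ _].
  have neq12 : e |: (Y :\ y1) != e |: (Y :\ y2).
    apply/negP => /eqP eq12.
    have : y2 \in e |: (Y :\ y1) by rewrite !inE (negbTE ey2) y21 y2Y.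
    by rewrite eq12 !inE (negbTE ey2) eqxx.
  have ein : e \in (e |: (Y :\ y1)) :&: (e |: (Y :\ y2)) by rewrite !inE eqxx.
  have [C3 C3C C3sub] := elim3 _ _ e C1 C2 neq12 ein.
  have C3Y : C3 \subset Y.
    apply/subsetP => x /(subsetP C3sub); rewrite !inE => /andP [xe].
    by rewrite (negbTE xe) /= => /orP [/andP [_ ->]|/andP [_ ->]].
  have := circ_card C3C.
  have : (C3 == Y) = (C3 \subset Y) && (#|Y| <= #|C3|) by rewrite eqEcard.
  rewrite C3Y cY /= => <- /eqP <-; exact: C3C.
have candU : hyp_candidate n C U.
  apply/andP; split.
    apply: leq_trans (dh_card hl) _; apply: subset_leq_card; apply: subsetUl.
  apply/forallP => Y; apply/implyP => /andP [YU /eqP cY].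
  exact: (key _ Y (ltnSn _) YU cY).
move: hl hl'; rewrite !inE => /maxsetP [_ H1] /maxsetP [_ H2].
by rewrite -(H1 U candU (subsetUl _ _)) -(H2 U candU (subsetUr _ _)).
Qed.

End Main.

Lemma ar_pred0 n : n <= 1 -> n.-1 = 0. Proof. lia. Qed.
Lemma ar_two n : n <= 2 -> n.-1 <= 1. Proof. lia. Qed.
Lemma ar_2le n : 2 < n -> 2 <= n.-1. Proof. lia. Qed.
Lemma ar_1le n : 1 < n -> 1 <= n.-1. Proof. lia. Qed.
Lemma ar_nle n : 0 < n -> n <= n.-1 -> False. Proof. lia. Qed.
Lemma ar_nSle n : n.+1 <= n.-1 -> False. Proof. lia. Qed.
Lemma ar_nSle' n : n.+1 <= n -> False. Proof. lia. Qed.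
Lemma ar5 a b n : 2 < n -> a = 1 + b -> a = n.-1 -> 0 < b. Proof. lia. Qed.
Lemma ar_sn n : 0 < n -> 1 + n.-1 = n. Proof. lia. Qed.
Lemma ar_le n m : m < n -> m <= n.-1. Proof. lia. Qed.

Section Main2.
Variables (E : finType) (n : nat) (C : {set {set E}}) (Q : {set {set {set E}}}).
Hypothesis hP : paving n C.
Hypothesis hT : tame n C.
Hypothesis hQ : partition Q (dep_hyps n C).
Hypothesis hN : nice n C Q.

Lemma part_dh (Qi : {set {set E}}) (l : {set E}) : Qi \in Q -> l \in Qi -> l \in dep_hyps n C.
Proof. move=> QiQ lQi; case/and3P: hQ => /eqP <- _ _; apply/bigcupP; by exists Qi. Qed.

Lemma part_uniq (Qa Qb : {set {set E}}) (l : {set E}) :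
  Qa \in Q -> Qb \in Q -> l \in Qa -> l \in Qb -> Qa = Qb.
Proof.
case/and3P: hQ => _ tI _ Qa_ Qb_ la lb.
by rewrite -(def_pblock tI Qa_ la) (def_pblock tI Qb_ lb).
Qed.

Lemma coverP (Qb : {set {set E}}) (x : E) : x \in cover Qb -> exists2 l, l \in Qb & x \in l.
Proof. by move/bigcupP. Qed.

Lemma sub_cover (Qb : {set {set E}}) (l : {set E}) : l \in Qb -> l \subset cover Qb.
Proof. move=> lQ; apply/subsetP => x xl; apply/bigcupP; by exists l. Qed.

Lemma three (Qi Qa Qb : {set {set E}}) (l : {set E}) (x : E) :
  Qi \in Q -> Qa \in Q -> Qb \in Q -> l \in Qi -> x \in l ->
  Qa != Qb -> Qa != Qi -> Qb != Qi -> x \in cover Qa -> x \in cover Qb -> False.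
Proof.
move=> Qi_ Qa_ Qb_ lQi xl ab ai bi /coverP [la laQ xla] /coverP [lb lbQ xlb].
have dl := part_dh Qi_ lQi; have dla := part_dh Qa_ laQ; have dlb := part_dh Qb_ lbQ.
have n1 : l != la.
  by apply/eqP => e; subst la; move/eqP: ai; apply; exact: part_uniq Qa_ Qi_ laQ lQi.
have n2 : l != lb.
  by apply/eqP => e; subst lb; move/eqP: bi; apply; exact: part_uniq Qb_ Qi_ lbQ lQi.
have n3 : la != lb.
  by apply/eqP => e; subst lb; move/eqP: ab; apply; exact: part_uniq Qa_ Qb_ laQ lbQ.
have := hT dl dla dlb n1 n2 n3.
by move/setP/(_ x); rewrite !inE xl xla xlb.
Qed.

Lemma two (la lb : {set E}) (x : E) : la \in dep_hyps n C -> lb \in dep_hyps n C ->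
  la != lb -> n <= 2 -> x \in la -> x \in lb -> False.
Proof.
move=> da db nab n2 xa xb; move/eqP: nab; apply; apply: (dh_inter hP da db).
apply: leq_trans (ar_two n2) _.
by rewrite card_gt0; apply/set0Pn; exists x; rewrite inE xa xb.
Qed.

Definition good (Qi : {set {set E}}) (X0 : {set E}) :=
  forall Qb, Qb \in Q -> Qb != Qi -> ~~ (X0 \subset cover Qb).

Lemma good_exists (Qi : {set {set E}}) (l : {set E}) : 1 < n -> Qi \in Q -> l \in Qi ->
  exists X0 : {set E}, [/\ X0 \subset l, #|X0| = n.-1 & good Qi X0].
Proof.
move=> n1 Qi_ lQi.
have dl := part_dh Qi_ lQi.
have kA : n.-1 <= #|l| by apply: leq_trans (leq_pred n) (dh_card dl).
have : 0 < #|l| by apply: leq_trans (dh_card dl); apply: ltnW.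
rewrite card_gt0 => /set0Pn [x1 x1l].
case: (boolP [exists Qb in Q, (Qb != Qi) && (x1 \in cover Qb)]) =>
   [/existsP [Qb1 /and3P [Qb1_ b1i x1b1]] | none].
- have [n2|n3] := leqP n 2.
    exfalso; case/coverP: x1b1 => l'' l''Q x1l''.
    apply: (two dl (part_dh Qb1_ l''Q) _ n2 x1l x1l'').
    apply/eqP => e; subst l''; move/eqP: b1i; apply; exact: part_uniq Qb1_ Qi_ l''Q lQi.
  have lnQ : l \notin Qb1.
    by apply/negP => lb; move/eqP: b1i; apply; exact: part_uniq Qb1_ Qi_ lb lQi.
  case: hN => _ /(_ Qb1 l Qb1_ dl lnQ) /subsetPn [x2 x2l x2nb].
  have D1 : [set x1; x2] \subset l by rewrite subUset !sub1set x1l x2l.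
  have D2 : #|[set x1; x2]| <= n.-1.
    by apply: leq_trans (ar_2le n3); rewrite cards2; case: (x1 != x2).
  have [X0 [DX X0l cX]] := extend_subset D1 D2 kA.
  exists X0; split => // Qb Qb_ bi; apply/negP => Xb.
  have x1b : x1 \in cover Qb by apply: (subsetP Xb); apply: (subsetP DX); rewrite !inE eqxx.
  have x2b : x2 \in cover Qb by apply: (subsetP Xb); apply: (subsetP DX); rewrite !inE eqxx orbT.
  have bb1 : Qb != Qb1 by apply: contraNneq x2nb => <-.
  exact: (three Qi_ Qb_ Qb1_ lQi x1l bb1 bi b1i x1b x1b1).
- have D1 : [set x1] \subset l by rewrite sub1set x1l.
  have D2 : #|[set x1]| <= n.-1 by rewrite cards1; apply: ar_1le.
  have [X0 [DX X0l cX]] := extend_subset D1 D2 kA.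
  exists X0; split => // Qb Qb_ bi; apply/negP => Xb.
  have : [exists Qb in Q, (Qb != Qi) && (x1 \in cover Qb)].
    apply/existsP; exists Qb; rewrite Qb_ bi /=.
    by apply: (subsetP Xb); apply: (subsetP DX); rewrite !inE.
  by rewrite (negbTE none).
Qed.

Lemma good_indep (Qi : {set {set E}}) (X0 : {set E}) :
  #|X0| = n.-1 -> 0 < n -> good Qi X0 -> indep (MQ n Q) X0.
Proof.
move=> cX n0 gX; apply: indepP => Y; rewrite inE => /or3P [t1|t2|t3] YX.
- case/andP: t1 => /eqP cY /existsP [Qa /andP [Qa_ /existsP [Qb /andP [Qb_ /andP [ab Ysub]]]]].
  have eYX : Y = X0 by apply/eqP; rewrite eqEcard YX cY cX leqnn.
  subst Y; rewrite subsetI in Ysub; case/andP: Ysub => Ya Yb.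
  case: (eqVneq Qa Qi) => [eai|nai].
    subst Qa; have bi : Qb != Qi by rewrite eq_sym.
    by move: (gX Qb Qb_ bi); rewrite Yb.
  by move: (gX Qa Qa_ nai); rewrite Ya.
- case/and3P: t2 => /eqP cY _ _; have := subset_leq_card YX; rewrite cY cX.
  exact: ar_nle.
- case/andP: t3 => /eqP cY _; have := subset_leq_card YX; rewrite cY cX.
  exact: ar_nSle.
Qed.

Lemma part1 (l : {set E}) : l \in dep_hyps n C -> mrank (MQ n Q) l = n.-1.
Proof.
move=> dl; have n0 := dh_n hP dl.
have lc : l \in cover Q by case/and3P: hQ => /eqP ->.
have Qi_ : pblock Q l \in Q := pblock_mem lc.
have lQi : l \in pblock Q l by rewrite mem_pblock.
apply/eqP; rewrite eqn_leq; apply/andP; split.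
- apply: mrank_le => I Il iI; apply: ar_le.
  apply: (@indep_small _ (MQ n Q) l n _ I Il iI) => Z Zl cZ.
  case: (boolP [exists Y : {set E}, (Y \subset Z) && type1 n Q Y]) =>
     [/existsP [Y /andP [YZ t1]]|nt1].
    by exists Y => //; rewrite inE t1.
  exists Z => //; rewrite inE; apply/or3P; apply: Or32.
  rewrite /type2 cZ eqxx nt1 andbT /=; apply/existsP; exists (pblock Q l); rewrite Qi_ /=.
  exact: subset_trans Zl (sub_cover lQi).
- case: (ltnP 1 n) => [n1|n1]; last by rewrite ar_pred0.
  have [X0 [X0l cX gX]] := good_exists n1 Qi_ lQi.
  rewrite -cX; apply: mrank_ge X0l _; exact: good_indep cX n0 gX.
Qed.

Lemma part2 (Qi Qj : {set {set E}}) (l1 l2 : {set E}) : Qi \in Q -> Qj \in Q -> Qi != Qj ->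
  l1 \in Qi -> l2 \in Qj -> mrank (MQ n Q) (l1 :|: l2) = n.
Proof.
move=> Qi_ Qj_ ij l1Q l2Q.
have d1 := part_dh Qi_ l1Q; have d2 := part_dh Qj_ l2Q; have n0 := dh_n hP d1.
have l12 : l1 != l2.
  by apply/eqP => e; subst l2; move/eqP: ij; apply; exact: part_uniq Qi_ Qj_ l1Q l2Q.
apply/eqP; rewrite eqn_leq; apply/andP; split.
- apply: mrank_le => I Il iI; rewrite -ltnS.
  apply: (@indep_small _ (MQ n Q) (l1 :|: l2) n.+1 _ I Il iI) => Z Zl cZ.
  case: (boolP [exists Y : {set E}, (Y \subset Z) && (type1 n Q Y || type2 n Q Y)]) =>
     [/existsP [Y /andP [YZ t12]]|nt].
    exists Y => //; rewrite inE; case/orP: t12 => -> //; by rewrite orbT.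
  exists Z => //; rewrite inE; apply/or3P; apply: Or33.
  by rewrite /type3 cZ eqxx nt.
- case: (ltnP 1 n) => [n1|n1]; last first.
    exfalso; move/eqP: l12; apply; apply: (dh_inter hP d1 d2).
    by rewrite ar_pred0.
  have [X0 [X0l cX gX]] := good_exists n1 Qi_ l1Q.
  have l2nQ : l2 \notin Qi.
    by apply/negP => lb; move/eqP: ij; apply; exact: part_uniq Qi_ Qj_ lb l2Q.
  case: hN => _ /(_ Qi l2 Qi_ d2 l2nQ) /subsetPn [y yl2 ynQ].
  have yX0 : y \notin X0.
    apply: contra ynQ => yX; apply: (subsetP (sub_cover l1Q)); exact: (subsetP X0l y yX).
  have cX' : #|y |: X0| = n by rewrite cardsU1 yX0 cX ar_sn.
  have gi := good_indep cX n0 gX.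
  rewrite -[X in X <= _]cX'; apply: mrank_ge.
    rewrite subUset sub1set inE yl2 orbT /=.
    exact: subset_trans X0l (subsetUl _ _).
  apply: indepP => Y; rewrite inE => /or3P [t1|t2|t3] YX.
  + case: (boolP (y \in Y)) => yY; last first.
      have YX0 : Y \subset X0.
        apply/subsetP => x xY; have := subsetP YX x xY; rewrite !inE.
        case/orP => // /eqP exy; by rewrite -exy xY in yY.
      by move/forallP: gi => /(_ Y); rewrite inE t1 YX0.
    case/andP: t1 => /eqP cY /existsP [Qa /andP [Qa_ /existsP [Qb /andP [Qb_ /andP [ab Ysub]]]]].
    rewrite subsetI in Ysub; case/andP: Ysub => Ya Yb.
    have yQa := subsetP Ya y yY; have yQb := subsetP Yb y yY.
    have ai : Qa != Qi by apply: contraNneq ynQ => <-.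
    have bi : Qb != Qi by apply: contraNneq ynQ => <-.
    have [n2|n3] := leqP n 2.
      case/coverP: yQa => la laQ yla; case/coverP: yQb => lb lbQ ylb.
      apply: (two (part_dh Qa_ laQ) (part_dh Qb_ lbQ) _ n2 yla ylb).
      by apply/eqP => e; subst lb; move/eqP: ab; apply; exact: part_uniq Qa_ Qb_ laQ lbQ.
    have : 0 < #|Y :\ y|.
      by apply: (ar5 n3 _ cY); rewrite (cardsD1 y Y) yY.
    rewrite card_gt0 => /set0Pn [x']; rewrite !inE => /andP [x'y x'Y].
    have x'X0 : x' \in X0.
      by have := subsetP YX x' x'Y; rewrite !inE (negbTE x'y).
    exact: (three Qi_ Qa_ Qb_ l1Q (subsetP X0l x' x'X0) ab ai bi
             (subsetP Ya x' x'Y) (subsetP Yb x' x'Y)).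
  + case/and3P: t2 => /eqP cY /existsP [Qc /andP [Qc_ Ysub]] _.
    have eY : Y = y |: X0 by apply/eqP; rewrite eqEcard YX cY cX' leqnn.
    subst Y; case: (eqVneq Qc Qi) => [eci|nci].
      subst Qc; move/negP: ynQ; apply; apply: (subsetP Ysub); by rewrite !inE eqxx.
    move: (gX Qc Qc_ nci); rewrite (subset_trans (subsetUr _ _) Ysub) //.
  + case/andP: t3 => /eqP cY _; have := subset_leq_card YX; rewrite cY cX'.
    exact: ar_nSle'.
Qed.

End Main2.

Theorem lemma8p2 (E : finType) (n : nat) (C : {set {set E}})
  (Q : {set {set {set E}}}) :
  paving n C -> tame n C -> partition Q (dep_hyps n C) -> nice n C Q ->
  (forall l, l \in dep_hyps n C -> mrank (MQ n Q) l = n.-1) /\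
  (forall Qi Qj l1 l2, Qi \in Q -> Qj \in Q -> Qi != Qj ->
     l1 \in Qi -> l2 \in Qj -> mrank (MQ n Q) (l1 :|: l2) = n).
Proof.
move=> hP hT hQ hN; split.
- exact: (part1 hP hT hQ hN).
- exact: (part2 hP hT hQ hN).
Qed.
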